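(* Let $m \ge \ell \ge k \ge 1$ and let ${\mathcal{C}} = {\mathcal{C}}[\ell+m,\ell,k]$ be constructed as in the context, for any choice of design parameters $h \in \{0,\dots,k-1\}$ at every level of the recursion. Then every element of ${\mathcal{C}}$ is an $\ell$-dimensional subspace of $W$, and for all $U,V\in{\mathcal{C}}$ with $U\neq V$ we have $\dim(U\cap V)\le k-1$. Consequently $d(U,V)\ge 2(\ell-k+1)$ for all distinct $U,V\in{\mathcal{C}}$.
   Context: Let $q$ be a prime power. Subspace distance: for subspaces $U,V$ of an $\mathbb{F}_q$-vector space, $d(U,V) = \dim U + \dim V - 2\dim(U\cap V)$. Kötter–Kschischang code ${\mathcal{K}}[n,\ell,k]$ (for $n-\ell \ge \ell \ge k \ge 1$): put $m=n-\ell$, $\mathbb{F}=\mathbb{F}_{q^m}$, fix $\mathbb{F}_q$-linearly independent $\alpha_1,\dots,\alpha_\ell \in \mathbb{F}$, let $\langle A\rangle$ be their $\mathbb{F}_q$-span and $W = \langle A\rangle \times \mathbb{F}$ (an $n$-dimensional $\mathbb{F}_q$-space, vectors written $(v_1,v_2)$). For a linearized polynomial $f(x)=\sum_{i=0}^{k-1} f_i x^{q^i}$ with $f_i\in\mathbb{F}$, let ${\mathcal{E}}(f)=\mathrm{span}_{\mathbb{F}_q}\{(\alpha_i,f(\alpha_i)) : 1\le i\le \ell\}$, and ${\mathcal{K}}[n,\ell,k]=\{{\mathcal{E}}(f)\}$. It is known that $|{\mathcal{K}}[n,\ell,k]| = q^{mk}$ and that distinct elements of ${\mathcal{K}}$ intersect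 in dimension at most $k-1$. Any $n$-dimensional $\mathbb{F}_q$-space is identified with such a $W$ via a fixed linear isomorphism. Recursive code ${\mathcal{C}}[\ell+m,\ell,k]$ (for $m\ge \ell \ge k$), in $W=\langle A\rangle\times\mathbb{F}$, $\mathbb{F}=\mathbb{F}_{q^m}$: choose a design parameter $h=h_{\ell+m}\in\{0,\dots,k-1\}$. If $m<2(\ell-h)$ or $\ell-h<k$, set ${\mathcal{C}}={\mathcal{K}}[\ell+m,\ell,k]$. Otherwise let ${\mathcal{C}}[m,\ell-h,k]=\{U_1,\dots,U_N\}$ be the recursively constructed code inside $\mathbb{F}$ (viewed as an $m$-dimensional $\mathbb{F}_q$-space), $N$ its size, and fix a basis $e^\sigma_1,\dots,e^\sigma_{\ell-h}$ of each $U_\sigma$. If $h>0$, let $t=\min\{\lfloor \ell/h\rfloor, N\}$ and $S_\sigma=\{(\alpha_j,0) : (\sigma-1)h+1\le j\le \sigma h\}$; if $h=0$, let $t=N$ and $S_\sigma=\emptyset$. Let $T_\sigma=\{(0,e^\sigma_j): 1\le j\le \ell-h\}$, $V_\sigma=\mathrm{span}(S_\sigma\cup T_\sigma)$ for $1\le\sigma\le t$, ${\mathcal{B}}=\{V_\sigma\}$, and ${\mathcal{C}}={\mathcal{K}}[\ell+m,\ell,k]\cup{\mathcal{B}}$. *)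

(* Defs.v *)
From HB Require Import structures.
From mathcomp Require Import all_boot all_order all_algebra all_field.
Set Implicit Arguments. Unset Strict Implicit. Unset Printing Implicit Defensive.
Import GRing.Theory.
Local Open Scope ring_scope.

(* K plays the role of F_q (q = #|K|); a field L : fieldExtType K with
   \dim {:L} = m plays the role of F = F_{q^m}. *)

Definition subspace_dist (K : fieldType) (vT : vectType K) (U V : {vspace vT}) : nat :=
  (\dim U + \dim V - 2 * \dim (U :&: V))%N.

Definition linpoly (K : finFieldType) (L : fieldExtType K) (k : nat)
  (c : 'I_k -> L) (x : L) : L :=
  \sum_(i < k) c i * x ^+ (#|K| ^ i).

(* The KK codeword E(f) = span{(alpha_i, f(alpha_i))}, transported to the
   ambient space vT by the fixed linear isomorphism phi : W -> vT. *)
Definition KKel (K : finFieldType) (L : fieldExtType K) (vT : vectType K)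
  (phi : 'Hom((L * L)%type, vT)) (A : seq L) (k : nat) (c : 'I_k -> L)
  : {vspace vT} :=
  (phi @: <<[seq (a, linpoly c a) | a <- A]>>)%VS.

(* Shared data of one level of the construction: F = L = F_{q^m}, the
   F_q-independent alpha_1..alpha_l (the list A), the linear isomorphism
   phi from W = <A> x F onto the ambient space vT, and an enumeration s of
   the Koetter--Kschischang code K[l+m,l,k]. *)
Definition KKdata (K : finFieldType) (vT : vectType K) (l m k : nat)
  (L : fieldExtType K) (A : seq L) (phi : 'Hom((L * L)%type, vT))
  (s : seq {vspace vT}) : Prop :=
  [/\ \dim {:L} = m, size A = l, free A,
      ((forall v w : (L * L)%type, v.1 \in <<A>>%VS -> w.1 \in <<A>>%VS ->
          phi v = phi w -> v = w) /\
      (forall y : vT, exists v : (L * L)%type, v.1 \in <<A>>%VS /\ phi v = y))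
    & (forall U, U \in s <-> exists c : 'I_k -> L, U = KKel phi A c)].

(* RecCode K vT l m k C : C (as a list of subspaces of the (l+m)-dimensional
   space vT) is a code C[l+m,l,k] obtained by the recursive construction,
   for some choice of the design parameter h at every level (and of all the
   other "fixed" choices: alphas, identifications, enumerations, bases). *)
Unset Implicit Arguments.
Inductive RecCode (K : finFieldType) :
    forall (vT : vectType K), nat -> nat -> nat -> seq {vspace vT} -> Prop :=
| RecCode_base (vT : vectType K) (l m k h : nat) (L : fieldExtType K) (A : seq L)
    (phi : 'Hom((L * L)%type, vT)) (s : seq {vspace vT}) :
    KKdata l m k A phi s -> (h < k)%N ->
    ((m < 2 * (l - h)) || (l - h < k))%N ->
    RecCode K vT l m k s
| RecCode_rec (vT : vectType K) (l m k h : nat) (L : fieldExtType K) (A : seq L)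
    (phi : 'Hom((L * L)%type, vT)) (s : seq {vspace vT})
    (D : seq {vspace L}) (e : nat -> seq L) :
    KKdata l m k A phi s -> (h < k)%N ->
    ~~ ((m < 2 * (l - h)) || (l - h < k))%N ->
    RecCode K L (l - h) (m - (l - h)) k D ->
    (* N = |C[m,l-h,k]|, U_sigma = nth sigma (undup D); t as in the paper *)
    let N := size (undup D) in
    let t := if (0 < h)%N then minn (l %/ h) N else N in
    (forall sigma, (sigma < t)%N ->
        size (e sigma) = (l - h)%N /\ basis_of (nth 0%VS (undup D) sigma) (e sigma)) ->
    let V sigma : {vspace vT} :=
      (phi @: <<[seq (nth (0%R : L) A j, (0%R : L)) | j <- iota (sigma * h) h]
               ++ [seq ((0%R : L), x) | x <- e sigma]>>)%VS in
    RecCode K vT l m k (s ++ [seq V sigma | sigma <- iota 0 t]).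
Set Implicit Arguments.

(* Main.v *)
Require Import Defs.
From HB Require Import structures.
From mathcomp Require Import all_boot all_order all_algebra all_field.
Set Implicit Arguments. Unset Strict Implicit. Unset Printing Implicit Defensive.
Import GRing.Theory.
Local Open Scope ring_scope.

Section LP.
Variables (K : finFieldType) (L : fieldExtType K).

Lemma expq_add (x y : L) i : (x + y) ^+ (#|K| ^ i) = x ^+ (#|K| ^ i) + y ^+ (#|K| ^ i).
Proof.
have [p _ pcharFp] := finPcharP K; rewrite (card_pprimeChar pcharFp).
rewrite -expnM.
elim: (_ * i)%N => [|n IHn]; first by rewrite !expr1.
rewrite expnSr !exprM {}IHn.
by rewrite -(pchar_lalg L) in pcharFp; rewrite -!(pFrobenius_autE pcharFp) rmorphD.
Qed.

Lemma expq_scal (a : K) (x : L) i : (a *: x) ^+ (#|K| ^ i) = a *: x ^+ (#|K| ^ i).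
Proof.
rewrite exprZn; congr (_ *: _).
elim: i => [|i IH]; first by rewrite expr1.
by rewrite expnSr exprM IH expf_card.
Qed.

Variable k : nat.
Variable c : 'I_k -> L.

Lemma linpoly_add : zmod_morphism (linpoly c).
Proof.
move=> x y; rewrite /linpoly -sumrB; apply: eq_bigr => i _.
rewrite -mulrBr; congr (_ * _). by rewrite -[in RHS](subrK y x) (expq_add (x - y) y) addrK.
Qed.

Lemma linpoly_scal : scalable (linpoly c).
Proof.
move=> a x; rewrite /linpoly scaler_sumr; apply: eq_bigr => i _.
by rewrite expq_scal scalerAr.
Qed.

HB.instance Definition _ := GRing.isZmodMorphism.Build L L (linpoly c) linpoly_add.
HB.instance Definition _ := GRing.isScalable.Build K L L *:%R (linpoly c) linpoly_scal.
End LP.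


Section KK.
Variables (K : finFieldType) (L : fieldExtType K).

Definition fstH : 'Hom((L * L)%type, L) := linfun fst.
Definition sndH : 'Hom((L * L)%type, L) := linfun snd.

Lemma fst_span (X : seq (L * L)) v : v \in <<X>>%VS -> v.1 \in <<map fst X>>%VS.
Proof.
move=> vX; have := memv_img fstH vX; rewrite limg_span lfunE /=.
by rewrite (eq_map (@lfunE _ _ _ fst)).
Qed.

Lemma snd_span (X : seq (L * L)) v : v \in <<X>>%VS -> v.2 \in <<map snd X>>%VS.
Proof.
move=> vX; have := memv_img sndH vX; rewrite limg_span lfunE /=.
by rewrite (eq_map (@lfunE _ _ _ snd)).
Qed.

Lemma roots_dim (P : {poly L}) (Z : {vspace L}) : P != 0 ->
  (forall z, z \in Z -> root P z) -> (#|K| ^ \dim Z < size P)%N.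
Proof.
move=> nzP rZ; set d := \dim Z; pose b := vbasis Z.
pose g (f : {ffun 'I_d -> K}) := \sum_(i < d) f i *: b`_i.
have freeb : free b := basis_free (vbasisP Z).
have ginj : injective g.
  move=> f1 f2 E; apply/ffunP => j.
  by rewrite -(coord_sum_free (fun i => f1 i) j freeb) -/(g f1) E coord_sum_free.
have := @max_poly_roots _ P (map g (enum {ffun 'I_d -> K})) nzP.
rewrite size_map -cardE card_ffun card_ord; apply.
  apply/allP => x /mapP [f _ ->]; apply: rZ.
  by apply: rpred_sum => i _; apply: rpredZ; apply: vbasis_mem; apply: mem_nth; rewrite size_tuple.
by rewrite map_inj_uniq ?enum_uniq.
Qed.

Variable A : seq L.
Variable k : nat.
Definition XX (c : 'I_k -> L) : {vspace (L * L)} := <<[seq (a, linpoly c a) | a <- A]>>%VS.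

Lemma memXX c w : w \in XX c -> w.2 = linpoly c w.1.
Proof.
pose G := (sndH - (linfun (linpoly c) \o fstH))%VF.
have : (XX c <= lker G)%VS.
  apply/span_subvP => v /mapP [a _ ->]; rewrite memv_ker.
  by rewrite add_lfunE opp_lfunE comp_lfunE !lfunE /= subrr.
move=> /subvP H /H; rewrite memv_ker add_lfunE opp_lfunE comp_lfunE !lfunE /=.
by rewrite subr_eq0 => /eqP.
Qed.

Lemma XX_fst_inj c (U : {vspace (L * L)}) : (U <= XX c)%VS -> \dim (fstH @: U) = \dim U.
Proof.
move=> /subvP sU; apply: limg_dim_eq; apply/eqP; rewrite -subv0; apply/subvP => w.
rewrite memv_cap memv_ker lfunE memv0 /= => /andP [/sU wX /eqP w1].
have w2 := memXX wX; rewrite w1 raddf0 in w2.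
by case: w w1 w2 {wX} => /= ? ? -> ->.
Qed.

Lemma XX_cap c d : XX c != XX d -> (\dim (XX c :&: XX d) <= k - 1)%N.
Proof.
move=> neq.
rewrite -(@XX_fst_inj c); last exact: capvSl.
set Z := (fstH @: _)%VS.
pose P : {poly L} := \sum_(i < k) (c i - d i) *: 'X^(#|K| ^ i).
have hP x : P.[x] = linpoly c x - linpoly d x.
  rewrite horner_sum /linpoly -sumrB; apply: eq_bigr => i _.
  by rewrite hornerZ hornerXn mulrBl.
have [P0 | nzP] := eqVneq P 0.
  case/negP: neq; apply/eqP; rewrite /XX; congr (<<_>>%VS); apply: eq_map => a.
  by have := hP a; rewrite P0 horner0 => /eqP; rewrite eq_sym subr_eq0 => /eqP ->.
have rts : (forall z, z \in Z -> root P z).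
  move=> z /memv_imgP [w /memv_capP [wc wd] ->]; rewrite lfunE /= rootE hP.
  by rewrite -(memXX wc) -(memXX wd) subrr.
have := roots_dim nzP rts.
have kpos : (0 < k)%N.
  rewrite lt0n; apply: contra nzP => /eqP k0; apply/eqP; apply: big1 => i _.
  by have := ltn_ord i; rewrite {2}k0.
move=> H; have : (size P <= (#|K| ^ (k - 1)).+1)%N.
  apply: leq_trans (size_sum _ _ _) _; apply/bigmax_leqP => i _.
  apply: leq_trans (size_scale_leq _ _) _; rewrite size_polyXn ltnS.
  by rewrite leq_exp2l ?finNzRing_gt1 // subn1 -ltnS prednK.
by move=> /(leq_trans H); rewrite ltnS leq_exp2l ?finNzRing_gt1.
Qed.

Lemma dim_img_le (f : 'Hom((L * L)%type, L)) (U : {vspace (L * L)}) : (\dim (f @: U) <= \dim U)%N.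
Proof. by rewrite -(limg_ker_dim f U) leq_addl. Qed.

Lemma span_zeros (E : seq L) : (<<[seq (0 : L)%R | x <- E]>> = 0)%VS.
Proof. by apply/eqP; rewrite -subv0; apply/span_subvP => v /mapP [x _ ->]; rewrite mem0v. Qed.

Lemma dimXX c : free A -> \dim (XX c) = size A.
Proof.
move=> fA; apply/eqP; rewrite eqn_leq; apply/andP; split.
  by apply: leq_trans (dim_span _) _; rewrite size_map.
rewrite -(eqP fA); apply: leq_trans (dim_img_le fstH _); apply: dimvS.
apply/span_subvP => a aA; apply/memv_imgP; exists (a, linpoly c a).
  by apply: memv_span; apply/mapP; exists a.
by rewrite lfunE.
Qed.

Section YY.
Variables (B E : seq L).
Definition SS := [seq (a, 0 : L) | a <- B].
Definition TT := [seq (0 : L, x) | x <- E].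
Definition YY : {vspace (L * L)} := <<SS ++ TT>>%VS.

Lemma memYY w : w \in YY -> w.1 \in <<B>>%VS /\ w.2 \in <<E>>%VS.
Proof.
move=> wY; split.
  have := fst_span wY; rewrite map_cat span_cat -map_comp /=.
  have -> : [seq (fst \o (fun a : L => (a, 0 : L))) i | i <- B] = B by elim: (B) => //= a s ->.
  by rewrite -map_comp span_zeros addv0.
have := snd_span wY; rewrite map_cat span_cat -!map_comp /=.
have -> : [seq (snd \o (fun a : L => (0 : L, a))) i | i <- E] = E by elim: (E) => //= a s ->.
by rewrite span_zeros add0v.
Qed.

Lemma dimYY : free B -> free E -> \dim YY = (size B + size E)%N.
Proof.
move=> fB fE.
have c0 : (<<SS>> :&: <<TT>> = 0)%VS.
  apply/eqP; rewrite -subv0; apply/subvP => w /memv_capP [wS wT].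
  have := snd_span wS; rewrite -map_comp span_zeros memv0 => /eqP w2.
  have := fst_span wT; rewrite -map_comp span_zeros memv0 => /eqP w1.
  by rewrite memv0; case: w w1 w2 {wS wT} => /= ? ? -> ->.
have dS : \dim <<SS>> = size B.
  apply/eqP; rewrite eqn_leq; apply/andP; split.
    by apply: leq_trans (dim_span _) _; rewrite size_map.
  rewrite -(eqP fB); apply: leq_trans (dim_img_le fstH _); apply: dimvS.
  apply/span_subvP => a aB; apply/memv_imgP; exists (a, 0).
    by apply: memv_span; apply/mapP; exists a.
  by rewrite lfunE.
have dT : \dim <<TT>> = size E.
  apply/eqP; rewrite eqn_leq; apply/andP; split.
    by apply: leq_trans (dim_span _) _; rewrite size_map.
  rewrite -(eqP fE); apply: leq_trans (dim_img_le sndH _); apply: dimvS.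
  apply/span_subvP => a aB; apply/memv_imgP; exists (0, a).
    by apply: memv_span; apply/mapP; exists a.
  by rewrite lfunE.
have := dimv_sum_cap <<SS>> <<TT>>; rewrite c0 dimv0 addn0 dS dT => <-.
by rewrite /YY span_cat.
Qed.

Lemma YY_XX_cap c : (\dim (YY :&: XX c) <= size B)%N.
Proof.
rewrite -(@XX_fst_inj c); last exact: capvSr.
apply: leq_trans (dim_span B); apply: dimvS; apply/subvP => z.
by move=> /memv_imgP [w /memv_capP [wY _] ->]; rewrite lfunE; case: (memYY wY).
Qed.
End YY.

Lemma YY_cap B1 E1 B2 E2 : (<<B1>> :&: <<B2>> = 0)%VS ->
  (\dim (YY B1 E1 :&: YY B2 E2) <= \dim (<<E1>> :&: <<E2>>))%N.
Proof.
move=> c0.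
have inj : ((YY B1 E1 :&: YY B2 E2) :&: lker sndH = 0)%VS.
  apply/eqP; rewrite -subv0; apply/subvP => w.
  rewrite memv_cap memv_cap memv_ker lfunE memv0 /= => /andP [/andP [w1 w2] /eqP z2].
  have : w.1 \in (<<B1>> :&: <<B2>>)%VS.
    by rewrite memv_cap (memYY w1).1 (memYY w2).1.
  by rewrite c0 memv0; case: w z2 {w1 w2} => /= ? ? -> /eqP ->.
rewrite -(limg_dim_eq inj); apply: dimvS; apply/subvP => z.
move=> /memv_imgP [w /memv_capP [w1 w2] ->]; rewrite lfunE memv_cap.
by rewrite (memYY w1).2 (memYY w2).2.
Qed.
End KK.
Lemma free_sub (K : fieldType) (vT : vectType K) (A : seq vT) (J : seq nat) :
  free A -> uniq J -> all (fun j => j < size A)%N J -> free (map (nth 0 A) J).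
Proof.
move=> fA uJ /allP JA; set n := size A.
have pe : perm_eq (iota 0 n) (J ++ filter (predC (mem J)) (iota 0 n)).
  apply: perm_trans (_ : perm_eq _ (filter (mem J) (iota 0 n) ++ filter (predC (mem J)) (iota 0 n))) _.
    by rewrite perm_sym perm_filterC.
  rewrite perm_cat2r; apply: uniq_perm; rewrite ?filter_uniq ?iota_uniq //.
  move=> x; rewrite mem_filter mem_iota /=; case xJ: (x \in J) => //=.
  by rewrite add0n JA.
have := perm_free (perm_map (nth 0 A) pe).
have -> : map (nth 0 A) (iota 0 n) = A by rewrite -/(mkseq _ _) mkseq_nth.
by rewrite fA map_cat => /esym; apply: catl_free.
Qed.

Section Phi.
Variables (K : finFieldType) (vT : vectType K) (L : fieldExtType K) (A : seq L).
Variable phi : 'Hom((L * L)%type, vT).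
Hypothesis injA : forall v w : (L * L)%type, v.1 \in <<A>>%VS -> w.1 \in <<A>>%VS ->
          phi v = phi w -> v = w.

Definition good (X : {vspace (L * L)}) := forall v, v \in X -> v.1 \in <<A>>%VS.

Lemma good_add X Y : good X -> good Y -> good (X + Y)%VS.
Proof.
move=> gX gY v /memv_addP [x xX [y yY ->]] /=.
by apply: rpredD; [apply: gX | apply: gY].
Qed.

Lemma dim_phi X : good X -> \dim (phi @: X) = \dim X.
Proof.
move=> gX; apply: limg_dim_eq; apply/eqP; rewrite -subv0; apply/subvP => v.
rewrite memv_cap memv_ker memv0 => /andP [vX /eqP p0].
apply/eqP; apply: injA; [exact: gX | by rewrite mem0v | by rewrite p0 linear0].
Qed.

Lemma dim_phi_cap X Y : good X -> good Y ->
  \dim (phi @: X :&: phi @: Y) = \dim (X :&: Y).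
Proof.
move=> gX gY; have h1 := dimv_sum_cap (phi @: X) (phi @: Y).
rewrite -limgD !dim_phi // in h1; last exact: good_add.
by apply/eqP; rewrite -(eqn_add2l (\dim (X + Y))) h1 dimv_sum_cap.
Qed.

Lemma good_XX k (c : 'I_k -> L) : good (XX A c).
Proof.
move=> v /fst_span; rewrite -map_comp /=.
by have -> : [seq (fst \o (fun a : L => (a, linpoly c a))) i | i <- A] = A by elim: (A) => //= a s ->.
Qed.

Lemma good_YY B E : {subset B <= <<A>>%VS} -> good (YY B E).
Proof. by move=> sB v /memYY [/(subvP (introT span_subvP sB)) ? _]. Qed.
End Phi.

Lemma iota_disj (s t h x : nat) : s != t -> x \in iota (s * h) h -> x \in iota (t * h) h -> False.
Proof.
rewrite !mem_iota => neq /andP [a1 b1] /andP [a2 b2].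
case: (ltngtP s t) neq => // st _.
  have : (s.+1 * h <= t * h)%N by rewrite leq_mul2r st orbT.
  by rewrite mulSn addnC => H; have := leq_trans b1 H; rewrite ltnNge a2.
have : (t.+1 * h <= s * h)%N by rewrite leq_mul2r st orbT.
by rewrite mulSn addnC => H; have := leq_trans b2 H; rewrite ltnNge a1.
Qed.

Lemma rec_main (K : finFieldType) (vT : vectType K) l m k (C : seq {vspace vT}) :
  RecCode K vT l m k C ->
  (forall U, U \in C -> \dim U = l) /\
  (forall U V, U \in C -> V \in C -> U != V -> (\dim (U :&: V)%VS <= k - 1)%N).
Proof.
elim => {vT l m k C}.
  move=> vT l m k h L A phi s [dL sA fA [injA surj] hs] _ _; split.
    move=> U /hs [c ->]; rewrite /KKel (dim_phi injA); last exact: good_XX.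
    by rewrite (dimXX _ fA).
  move=> U V /hs [c ->] /hs [d ->] neq.
  rewrite /KKel (dim_phi_cap injA); try exact: good_XX.
  apply: XX_cap; apply: contra neq => /eqP E; rewrite /XX in E.
  by rewrite /KKel E.
move=> vT l m k h L A phi s D e [dL sA fA [injA surj] hs] hk hc RD [IH1 IH2] N t he V.
have hkl : (k <= l - h)%N by move: hc; rewrite negb_or => /andP [_]; rewrite -leqNgt.
have hl : (h <= l)%N.
  case: (leqP h l) => // /ltnW; rewrite -subn_eq0 => /eqP z.
  by move: hkl; rewrite z leqn0 => /eqP k0; rewrite k0 in hk.
have hk1 : (h <= k - 1)%N by move: hk; case: (k) => // k'; rewrite subn1 ltnS.
have tN : (t <= N)%N by rewrite /t; case: ifP => _; [exact: geq_minr | exact: leqnn].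
pose Bs sg := [seq A`_j | j <- iota (sg * h) h].
have hV sg : V sg = (phi @: YY (Bs sg) (e sg))%VS by rewrite /V /YY /SS /TT -map_comp.
have hbound sg : (sg < t)%N -> (sg * h + h <= l)%N.
  rewrite /t; case: (posnP h) => [-> |hp]; first by rewrite muln0 addn0.
  rewrite leq_min => /andP [hs1 _].
  apply: leq_trans (leq_trunc_div l h); rewrite addnC -mulSn leq_mul2r hs1 orbT //.
have fB sg : (sg < t)%N -> free (Bs sg).
  move=> st; apply: free_sub fA (iota_uniq _ _) _; apply/allP => j.
  by rewrite mem_iota sA => /andP [_ hj]; apply: leq_trans hj (hbound sg st).
have sBA sg : (sg < t)%N -> {subset Bs sg <= <<A>>%VS}.
  move=> st a /mapP [j jI ->]; apply: memv_span; apply: mem_nth; rewrite sA.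
  by move: jI; rewrite mem_iota => /andP [_ hj]; apply: leq_trans hj (hbound sg st).
have gV sg : (sg < t)%N -> good A (YY (Bs sg) (e sg)).
  by move=> st; apply: good_YY; apply: sBA.
have inD sg : (sg < t)%N -> nth 0%VS (undup D) sg \in D.
  by move=> st; rewrite -mem_undup; apply: mem_nth; apply: leq_trans tN.
have fE sg : (sg < t)%N -> free (e sg) by move=> st; exact: basis_free (he sg st).2.
have spE sg : (sg < t)%N -> <<e sg>>%VS = nth 0%VS (undup D) sg.
  by move=> st; exact: span_basis (he sg st).2.
have dimV sg : (sg < t)%N -> \dim (V sg) = l.
  move=> st; rewrite hV (dim_phi injA); last exact: gV.
  rewrite dimYY ?fB ?fE //.
  by rewrite size_map size_iota (he sg st).1 subnKC.
have KV c sg : (sg < t)%N -> (\dim (KKel phi A c :&: V sg) <= k - 1)%N.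
  move=> st; rewrite hV /KKel (dim_phi_cap injA); [| exact: good_XX | exact: gV].
  rewrite capvC; apply: leq_trans (YY_XX_cap A _ _ c) _.
  by rewrite size_map size_iota.
have VV sg tu : (sg < t)%N -> (tu < t)%N -> V sg != V tu ->
    (\dim (V sg :&: V tu) <= k - 1)%N.
  move=> st tt neqV; have neq : sg != tu by apply: contra neqV => /eqP ->.
  rewrite !hV (dim_phi_cap injA); [| exact: gV | exact: gV].
  have c0 : (<<Bs sg>> :&: <<Bs tu>> = 0)%VS.
    have fcat : free (Bs sg ++ Bs tu).
      rewrite -map_cat; apply: free_sub fA _ _.
        rewrite cat_uniq !iota_uniq andbT /=; apply/hasPn => x xt; apply/negP => xs.
        exact: iota_disj neq xs xt.
      apply/allP => j; rewrite mem_cat !mem_iota sA => /orP [] /andP [_ hj].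
        by apply: leq_trans hj (hbound sg st).
      by apply: leq_trans hj (hbound tu tt).
    apply/eqP; rewrite -dimv_eq0.
    have := dimv_sum_cap <<Bs sg>> <<Bs tu>>.
    rewrite -span_cat (eqP fcat) (eqP (fB sg st)) (eqP (fB tu tt)) size_cat => /eqP.
    by rewrite -{2}[(size _ + size _)%N]addn0 eqn_add2l.
  apply: leq_trans (YY_cap _ _ c0) _; rewrite !spE //; apply: IH2; rewrite ?inD //.
  by rewrite nth_uniq ?undup_uniq // (leq_trans _ tN).
split.
  move=> U; rewrite mem_cat => /orP [/hs [c ->] | /mapP [sg sI ->]].
    by rewrite /KKel (dim_phi injA) ?(dimXX _ fA) //; exact: good_XX.
  by apply: dimV; move: sI; rewrite mem_iota.
move=> U W; rewrite !mem_cat.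
move=> /orP [/hs [c ->] | /mapP [sg sI ->]] /orP [/hs [d ->] | /mapP [tu tI ->]] neq.
- rewrite /KKel (dim_phi_cap injA); try exact: good_XX.
  apply: XX_cap; apply: contra neq => /eqP E; rewrite /XX in E.
  by rewrite /KKel E.
- by apply: KV; move: tI; rewrite mem_iota.
- by rewrite capvC; apply: KV; move: sI; rewrite mem_iota.
- by apply: VV => //; [move: sI | move: tI]; rewrite mem_iota.
Qed.

Close Scope ring_scope.
Unset Implicit Arguments.
From Stdlib Require Import Lia.

Theorem mainTheorem2 (K : finFieldType) (vT : vectType K) (l m k : nat)
    (C : seq {vspace vT}) :
    (1 <= k)%N -> (k <= l)%N -> (l <= m)%N ->
    RecCode K vT l m k C ->
    [/\ (forall U, U \in C -> \dim U = l),
        (forall U V, U \in C -> V \in C -> U != V -> (\dim (U :&: V)%VS <= k - 1)%N)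
      & (forall U V, U \in C -> V \in C -> U != V ->
           (2 * (l - k + 1) <= subspace_dist U V)%N)].
Proof.
move=> k1 kl lm RC; have [H1 H2] := rec_main RC; split => // U V UC VC neq.
rewrite /subspace_dist (H1 _ UC) (H1 _ VC).
have := H2 _ _ UC VC neq; move: (\dim _) => d hd.
move/leP: hd => hd; move/leP: k1 => k1'; move/leP: kl => kl'; apply/leP.
rewrite -!minusE in hd; rewrite -!plusE -!minusE -!multE; lia.
Qed.
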